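(* Let $0<m<L$, $\alpha>0$, and set $\kappa = L/m$. Suppose that $\delta \in \left[0, \tfrac{2}{\kappa+1}\right)$ and $\rho \geq \rho_\mathrm{GD}(\delta) := \max\big(1-(1-\delta)\alpha m,\ (1+\delta)\alpha L -1\big)$. If \[ \alpha \leq \frac{1}{1-\delta}\left( \frac{2}{L+m} - \frac{\delta}{m} \right) \quad\text{or}\quad \alpha \geq \frac{1}{1+\delta}\left( \frac{2}{L+m} + \frac{\delta}{L} \right), \] then there exists $c>0$ such that for every $f \in \mathcal{S}(m,L)$ (with reference point $x_\star$), every sequence $x(k)\in\mathbb{R}^n$ and every error sequence $e(k)\in\mathbb{R}^n$ satisfying, for all $k\ge 0$, \[ x(k+1) = x(k) - \alpha\big(\nabla f(x(k)) + e(k)\big), \qquad |e(k)| \leq \delta\, |\nabla f(x(k))|, \] we have $|x(k)-x_\star| \leq c\, \rho^k\, |x(0)-x_\star|$ for all $k \geq 0$.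
   Context: For $0\le m<L$, $\mathcal{S}(m,L)$ denotes the set of $C^1$ functions $f:\mathbb{R}^n\to\mathbb{R}$ for which there is a reference point $x_\star\in\mathbb{R}^n$ such that for every $x\in\mathbb{R}^n$, $\langle m(x-x_\star) - \nabla f(x),\ L(x-x_\star) - \nabla f(x)\rangle \le 0$ (gradients bounded in the sector $[m,L]$ about $x_\star$). The constant $c$ may depend on $m,L,\alpha,\delta,\rho$ but not on $f$, $x$ or $e$. *)

(* Defs.v *)
From HB Require Import structures.
From mathcomp Require Import all_boot all_order all_algebra.
From mathcomp Require Import all_classical all_reals all_analysis.
Set Implicit Arguments. Unset Strict Implicit. Unset Printing Implicit Defensive.
Import Order.TTheory GRing.Theory Num.Theory.
Import numFieldNormedType.Exports.
Local Open Scope ring_scope.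

(* Euclidean inner product and Euclidean norm on R^n (the library's norm on
   matrices is the sup norm, so we define the Euclidean one explicitly). *)
Definition dotv {R : realType} {n : nat} (u v : 'rV[R]_n) : R :=
  \sum_(i < n) u ord0 i * v ord0 i.

Definition enorm {R : realType} {n : nat} (u : 'rV[R]_n) : R :=
  Num.sqrt (dotv u u).

Definition C1_with_gradient {R : realType} {n : nat}
    (f : 'rV[R]_n -> R) (g : 'rV[R]_n -> 'rV[R]_n) : Prop :=
  (forall x, differentiable f x) /\
  (forall x v, 'D_v f x = dotv (g x) v) /\
  continuous g.

Definition in_sector_class {R : realType} {n : nat} (m L : R)
    (f : 'rV[R]_n -> R) (g : 'rV[R]_n -> 'rV[R]_n) (xs : 'rV[R]_n) : Prop :=
  C1_with_gradient f g /\
  forall x, dotv (m *: (x - xs) - g x) (L *: (x - xs) - g x) <= 0.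

Definition rho_GD {R : realType} (m L alpha delta : R) : R :=
  Num.max (1 - (1 - delta) * alpha * m) ((1 + delta) * alpha * L - 1).

(* Main.v *)
Require Import Defs.
From HB Require Import structures.
From mathcomp Require Import all_boot all_order all_algebra.
From mathcomp Require Import all_classical all_reals all_analysis.
From mathcomp Require Import ring lra.
Import Order.TTheory GRing.Theory Num.Theory.
Import numFieldNormedType.Exports.
Local Open Scope ring_scope.

Section Dot.
Context {R : realType} {n : nat}.
Implicit Types (u v w : 'rV[R]_n).

Lemma dotvC u v : dotv u v = dotv v u.
Proof. by apply: eq_bigr => i _; rewrite mulrC. Qed.

Lemma dotvDl u w v : dotv (u + w) v = dotv u v + dotv w v.
Proof. by rewrite /dotv -big_split; apply: eq_bigr => i _; rewrite !mxE mulrDl. Qed.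

Lemma dotvZl (a : R) u v : dotv (a *: u) v = a * dotv u v.
Proof. by rewrite /dotv mulr_sumr; apply: eq_bigr => i _; rewrite !mxE mulrA. Qed.

Lemma dotvNl u v : dotv (- u) v = - dotv u v.
Proof. by rewrite /dotv -sumrN; apply: eq_bigr => i _; rewrite !mxE mulNr. Qed.

Lemma dotvBl u w v : dotv (u - w) v = dotv u v - dotv w v.
Proof. by rewrite dotvDl dotvNl. Qed.

Lemma dotvDr u w v : dotv v (u + w) = dotv v u + dotv v w.
Proof. by rewrite dotvC dotvDl !(dotvC v). Qed.
Lemma dotvBr u w v : dotv v (u - w) = dotv v u - dotv v w.
Proof. by rewrite dotvC dotvBl !(dotvC v). Qed.
Lemma dotvZr (a : R) u v : dotv v (a *: u) = a * dotv v u.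
Proof. by rewrite dotvC dotvZl dotvC. Qed.

Lemma dotv_ge0 u : 0 <= dotv u u.
Proof. by apply: sumr_ge0 => i _; rewrite -expr2 sqr_ge0. Qed.

Lemma dotv_CS u v : dotv u v ^+ 2 <= dotv u u * dotv v v.
Proof.
have h1 := dotv_ge0 (dotv v v *: u - dotv u v *: v).
have h2 := dotv_ge0 (dotv u u *: v - dotv u v *: u).
have h3 := dotv_ge0 (u - v).
have h4 := dotv_ge0 (u + v).
move: h1 h2 h3 h4.
rewrite !(dotvBl, dotvDl, dotvBr, dotvDr, dotvZl, dotvZr) (dotvC v u).
have hA := dotv_ge0 u; have hB := dotv_ge0 v.
set A := dotv u u; set B := dotv v v; set c := dotv u v.
move=> h1 h2 h3 h4.
have e1 : 0 <= B * (A * B - c ^+ 2) by nra.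
have e2 : 0 <= A * (A * B - c ^+ 2) by nra.
have [hA0|hA0] := eqVneq A 0.
  have [hB0|hB0] := eqVneq B 0.
    have -> : c = 0 by rewrite hA0 hB0 in h3 h4; lra.
    by rewrite hA0 hB0; lra.
  have hBp : 0 < B by rewrite lt0r hB0 hB.
  by rewrite -subr_ge0 -(pmulr_rge0 _ hBp).
have hAp : 0 < A by rewrite lt0r hA0 hA.
by rewrite -subr_ge0; nra.
Qed.

Lemma enorm_ge0 u : 0 <= enorm u.
Proof. exact: sqrtr_ge0. Qed.

Lemma enorm_sq u : enorm u ^+ 2 = dotv u u.
Proof. by rewrite /enorm sqr_sqrtr // dotv_ge0. Qed.

Lemma enorm_le u (X : R) : 0 <= X -> dotv u u <= X ^+ 2 -> enorm u <= X.
Proof.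
move=> hX h; rewrite /enorm -(ger0_norm hX) -sqrtr_sqr; exact: ler_wsqrtr.
Qed.

End Dot.
Lemma core {R : realType} (m L a d rho N t : R) :
  0 < m -> m < L -> 0 < a -> 0 <= d -> d * (L + m) < 2 * m ->
  1 - (1 - d) * a * m <= rho -> (1 + d) * a * L - 1 <= rho ->
  (a * (1 - d) * m * (L + m) <= 2 * m - d * (L + m) \/
   2 * L + d * (L + m) <= a * (1 + d) * L * (L + m)) ->
  0 <= N -> m * N <= t -> t <= L * N ->
  0 <= rho * N - a * d * t /\
  N ^+ 2 - 2 * a * (t ^+ 2 + m * L * N ^+ 2) / (L + m) + a ^+ 2 * t ^+ 2
    <= (rho * N - a * d * t) ^+ 2.
Proof.
move=> hm hmL ha hd hdS h1 h2 hc hN ht1 ht2.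
have hS : 0 < L + m by lra.
have hS0 : L + m != 0 by rewrite gt_eqF.
set Q := N ^+ 2 - _ + _.
suff [r [hr [hU hQ]]] : exists r, r <= rho /\ 0 <= r * N - a * d * t /\
    Q <= (r * N - a * d * t) ^+ 2.
  have hrN : r * N <= rho * N by rewrite ler_wpM2r.
  split; first lra.
  apply: (le_trans hQ); rewrite ler_sqr ?nnegrE; lra.
set a2 := a ^+ 2 * d ^+ 2 - a ^+ 2 + 2 * a / (L + m).
have hd1 : d < 1.
  have : d * (L + m) < 1 * (L + m) by nra.
  by rewrite ltr_pM2r.
case: hc => hc.
-
  exists (1 - (1 - d) * a * m); split => //.
  set D1 := 2 * a * (2 * m / (L + m) - d - a * m * (1 - d)).
  have eq1 : ((1 - (1 - d) * a * m) * N - a * d * t) ^+ 2 - Q =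
     (t - m * N) * (D1 * N + a2 * (t - m * N)).
    by rewrite /Q /D1 /a2; field.
  have hX : a * (L + m) <= 2.
    have : (1 - d) * m * (a * (L + m) - 2) <= 0 by nra.
    rewrite pmulr_rle0 ?subr_le0 //; nra.
  have ha2 : 0 <= a2.
    have -> : a2 = a * (2 - a * (1 - d ^+ 2) * (L + m)) / (L + m).
      by rewrite /a2; field.
    apply: divr_ge0; last lra.
    apply: mulr_ge0; first lra.
    have : 0 <= a * d ^+ 2 * (L + m) by apply: mulr_ge0; [apply: mulr_ge0; [lra|apply: sqr_ge0]|lra].
    nra.
  have hD1 : 0 <= D1.
    have -> : D1 = 2 * a * ((2 * m - d * (L + m) - a * (1 - d) * m * (L + m)) / (L + m)).
      by rewrite /D1; field.
    apply: mulr_ge0; first lra.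
    apply: divr_ge0; lra.
  have hpos : 0 <= 1 - a * m * (1 - d) - a * d * L.
    have : 0 <= (L + m) * (1 - a * m * (1 - d) - a * d * L).
      have : d * L * (a * (L + m)) <= d * L * 2 by apply: ler_wpM2l; nra.
      nra.
    by rewrite pmulr_rge0.
  split.
    have : a * d * t <= a * d * (L * N) by apply: ler_wpM2l; nra.
    nra.
  rewrite -subr_ge0 eq1; apply: mulr_ge0; first lra.
  apply: addr_ge0; first nra.
  apply: mulr_ge0; lra.
- have haL : 1 <= a * L.
    have : (L + m) * (1 + d) <= (L + m) * ((1 + d) * (a * L)) by nra.
    rewrite ler_pM2l // -subr_ge0.
    have -> : (1 + d) * (a * L) - (1 + d) = (1 + d) * (a * L - 1) by ring.
    rewrite pmulr_rge0; lra.
  exists ((1 + d) * a * L - 1); split => //.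
  set D2 := 2 * a * (2 * L / (L + m) + d - a * L * (1 + d)).
  have eq2 : (((1 + d) * a * L - 1) * N - a * d * t) ^+ 2 - Q =
     (L * N - t) * (- D2 * N + a2 * (L * N - t)).
    by rewrite /Q /D2 /a2; field.
  set K := - D2 + a2 * (L - m).
  have eqK : (L - m) * K = ((1 + d) * a * L - 1 - a * d * m) ^+ 2 - (1 - a * m) ^+ 2.
    by rewrite /K /D2 /a2; field.
  have hD2 : D2 <= 0.
    have -> : D2 = 2 * a * ((2 * L + d * (L + m) - a * (1 + d) * L * (L + m)) / (L + m)).
      by rewrite /D2; field.
    rewrite pmulr_rle0; last lra.
    rewrite pmulr_lle0; [lra | by rewrite invr_gt0].
  have hg1 : 0 <= a * (L + m) + a * d * (L - m) - 2.
    have [hP|hP] := lerP 2 (a * (L + m)).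
      have : 0 <= a * d * (L - m) by apply: mulr_ge0; nra.
      lra.
    have hq : 0 <= (L + m) - 2 * a * m * L.
      have : 0 <= (L + m) * ((L + m) - 2 * a * m * L).
        have : m * L * (a * (L + m)) <= m * L * 2 by apply: ler_wpM2l; nra.
        nra.
      by rewrite pmulr_rge0.
    have : 0 <= L * (a * (L + m) + a * d * (L - m) - 2).
      have : 0 <= d * ((L + m) - 2 * a * m * L) by apply: mulr_ge0.
      nra.
    by rewrite pmulr_rge0; lra.
  have hK : 0 <= K.
    have : 0 <= (L - m) * K.
      rewrite eqK.
      have -> : ((1 + d) * a * L - 1 - a * d * m) ^+ 2 - (1 - a * m) ^+ 2 =
        (a * (L + m) + a * d * (L - m) - 2) * (a * (1 + d) * (L - m)) by ring.
      apply: mulr_ge0 => //; apply: mulr_ge0; [apply: mulr_ge0|]; lra.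
    by rewrite pmulr_rge0; lra.
  split.
    have : a * d * t <= a * d * (L * N) by apply: ler_wpM2l; nra.
    nra.
  rewrite -subr_ge0 eq2.
  have [hN0|hNp] := eqVneq N 0.
    have -> : t = 0 by move: ht1 ht2; rewrite hN0 !mulr0; lra.
    by rewrite hN0 !(mulr0, mul0r, subrr).
  have hNp' : 0 < N by rewrite lt0r hNp hN.
  apply: mulr_ge0; first lra.
  have eqB : (L - m) * N * (- D2 * N + a2 * (L * N - t)) =
     (t - m * N) * (- D2 * N) + (L * N - t) * (N * K).
    by rewrite /K; ring.
  have : 0 <= (L - m) * N * (- D2 * N + a2 * (L * N - t)).
    rewrite eqB; apply: addr_ge0; apply: mulr_ge0; nra.
  rewrite pmulr_rge0 //; apply: mulr_gt0; lra.
Qed.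

Lemma step (R : realType) (n : nat) (m L a d rho : R) (y G E : 'rV[R]_n) :
  0 < m -> m < L -> 0 < a -> 0 <= d -> d * (L + m) < 2 * m ->
  1 - (1 - d) * a * m <= rho -> (1 + d) * a * L - 1 <= rho ->
  (a * (1 - d) * m * (L + m) <= 2 * m - d * (L + m) \/
   2 * L + d * (L + m) <= a * (1 + d) * L * (L + m)) ->
  dotv (m *: y - G) (L *: y - G) <= 0 ->
  enorm E <= d * enorm G ->
  enorm (y - a *: (G + E)) <= rho * enorm y.
Proof.
move=> hm hmL ha hd hdS h1 h2 hc hsec hE.
have hN := enorm_ge0 y; have ht := enorm_ge0 G.
have hA := enorm_sq y; have hb := enorm_sq G.
set N := enorm y in hN hA *; set t := enorm G in ht hb hE *.
move: hsec; rewrite !(dotvBl, dotvBr, dotvZl, dotvZr) (dotvC G y) -hA -hb.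
set c := dotv y G => hsec.
have hCS : c <= N * t.
  have := dotv_CS y G; rewrite -/c -hA -hb => h.
  have hz : 0 <= N * t by apply: mulr_ge0.
  move: h; rewrite -exprMn; move: hz; set z := N * t => hz h; nra.
have hfac : (t - m * N) * (t - L * N) <= 0 by nra.
have ht1 : m * N <= t.
  rewrite leNgt; apply/negP => hlt.
  have : m * N <= L * N by apply: ler_wpM2r; lra.
  nra.
have ht2 : t <= L * N.
  rewrite leNgt; apply/negP => hlt.
  have : m * N <= L * N by apply: ler_wpM2r; lra.
  nra.
have [hU hQ] := @core R m L a d rho N t hm hmL ha hd hdS h1 h2 hc hN ht1 ht2.
set w := y - a *: G.
have hW : dotv w w = N ^+ 2 - 2 * a * c + a ^+ 2 * t ^+ 2.
  rewrite /w !(dotvBl, dotvBr, dotvZl, dotvZr) (dotvC G y) -hA -hb -/c; ring.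
have hS : 0 < L + m by lra.
have hWQ : dotv w w <= (rho * N - a * d * t) ^+ 2.
  apply: le_trans hQ; rewrite hW -subr_ge0.
  have -> : N ^+ 2 - 2 * a * (t ^+ 2 + m * L * N ^+ 2) / (L + m) + a ^+ 2 * t ^+ 2 -
    (N ^+ 2 - 2 * a * c + a ^+ 2 * t ^+ 2) =
    2 * a * ((c * (L + m) - t ^+ 2 - m * L * N ^+ 2) / (L + m)).
    by field; rewrite gt_eqF.
  apply: mulr_ge0; first lra.
  apply: divr_ge0; nra.
have hw : enorm w <= rho * N - a * d * t by apply: enorm_le.
have -> : y - a *: (G + E) = w - a *: E by rewrite /w scalerDr opprD addrA.
clearbody w.
have hwe := enorm_ge0 w; have hee := enorm_ge0 E.
have hW2 := enorm_sq w; have hE2 := enorm_sq E.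
have hadt : 0 <= a * d * t by apply: mulr_ge0 => //; apply: mulr_ge0; lra.
have hX : 0 <= rho * N by lra.
apply: enorm_le => //.
rewrite !(dotvBl, dotvBr, dotvZl, dotvZr) (dotvC E w).
have := dotv_CS w E.
set p := dotv w E; rewrite -hW2 -hE2 => hp.
have hp' : - p <= enorm w * enorm E.
  have hz : 0 <= enorm w * enorm E by apply: mulr_ge0.
  move: hp; rewrite -exprMn; move: hz; set z := enorm w * enorm E => hz h; nra.
have hfin : enorm w + a * enorm E <= rho * N.
  have : a * enorm E <= a * (d * t) by apply: ler_wpM2l; lra.
  lra.
have hsq : (enorm w + a * enorm E) ^+ 2 <= (rho * N) ^+ 2.
  rewrite ler_sqr ?nnegrE //; apply: addr_ge0 => //; apply: mulr_ge0; lra.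
apply: le_trans hsq.
have -> : enorm w ^+ 2 - a * p - a * (p - a * enorm E ^+ 2) =
  (enorm w + a * enorm E) ^+ 2 - 2 * a * (p + enorm w * enorm E) by ring.
rewrite lerBlDr lerDl; apply: mulr_ge0; lra.
Qed.

Theorem proposition1p1 (R : realType) (m L alpha delta rho : R) :
  0 < m -> m < L -> 0 < alpha ->
  0 <= delta -> delta < 2 / (L / m + 1) ->
  rho_GD m L alpha delta <= rho ->
  (alpha <= (1 - delta)^-1 * (2 / (L + m) - delta / m) \/
   (1 + delta)^-1 * (2 / (L + m) + delta / L) <= alpha) ->
  exists c : R, 0 < c /\
    forall (n : nat) (f : 'rV[R]_n -> R) (g : 'rV[R]_n -> 'rV[R]_n)
           (xs : 'rV[R]_n) (x e : nat -> 'rV[R]_n),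
      in_sector_class m L f g xs ->
      (forall k, x k.+1 = x k - alpha *: (g (x k) + e k)) ->
      (forall k, enorm (e k) <= delta * enorm (g (x k))) ->
      forall k, enorm (x k - xs) <= c * rho ^+ k * enorm (x 0%N - xs).
Proof.
move=> hm hmL ha hd hdel hrho hcond.
have hS : 0 < L + m by lra.
have hm0 : m != 0 by rewrite gt_eqF.
have hL0 : L != 0 by rewrite gt_eqF //; lra.
have hS0 : L + m != 0 by rewrite gt_eqF.
have hdS : delta * (L + m) < 2 * m.
  have e1 : 2 / (L / m + 1) = 2 * m / (L + m).
    by field; rewrite -?addrA; apply/andP; split => //; rewrite addrC.
  by move: hdel; rewrite e1 ltr_pdivlMr.
have hd1 : delta < 1 by nra.
move: hrho; rewrite /rho_GD ge_max => /andP[h1 h2].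
have hc : alpha * (1 - delta) * m * (L + m) <= 2 * m - delta * (L + m) \/
   2 * L + delta * (L + m) <= alpha * (1 + delta) * L * (L + m).
  case: hcond => hc; [left|right].
  - have e1 : (1 - delta)^-1 * (2 / (L + m) - delta / m) =
       (2 * m - delta * (L + m)) / ((1 - delta) * m * (L + m)).
      by field; rewrite hm0 hS0 /= subr_eq0 eq_sym lt_eqF.
    move: hc; rewrite e1 ler_pdivlMr; last by apply: mulr_gt0; [apply: mulr_gt0|]; lra.
    by rewrite !mulrA.
  - have e1 : (1 + delta)^-1 * (2 / (L + m) + delta / L) =
       (2 * L + delta * (L + m)) / ((1 + delta) * L * (L + m)).
      by field; rewrite hL0 hS0 /= gt_eqF //; lra.
    move: hc; rewrite e1 ler_pdivrMr; last by apply: mulr_gt0; [apply: mulr_gt0|]; lra.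
    by rewrite !mulrA.
have hrho0 : 0 <= rho.
  have : 0 <= alpha * (L - m + delta * (L + m)).
    apply: mulr_ge0; first lra.
    have : 0 <= delta * (L + m) by apply: mulr_ge0; lra.
    lra.
  have -> : alpha * (L - m + delta * (L + m)) =
    (1 - (1 - delta) * alpha * m) + ((1 + delta) * alpha * L - 1) - 2 * (1 - alpha * m) + 2 * (1 - alpha * m) - 0 by ring.
  lra.
exists 1; split => // n f g xs x e [_ hsec] hx he.
elim => [|k IH]; first by rewrite expr0 !mul1r.
have hy : x k.+1 - xs = (x k - xs) - alpha *: (g (x k) + e k).
  by rewrite hx addrAC.
rewrite hy.
apply: le_trans (@step R n m L alpha delta rho _ _ _ hm hmL ha hd hdS h1 h2 hc (hsec (x k)) (he k)) _.
rewrite exprS mul1r -mulrA ler_wpM2l //; by rewrite mul1r in IH.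
Qed.
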